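(* Let $f$ be a (partial) function $A^\omega\to A^\omega$ realizable by a $1$-deterministic $2$-automaton. Then for every infinite word $x$ in the domain of $f$, $\rho(f(x)/x)=0$.
   Context: A $k$-automaton $\langle Q,A,\delta,I\rangle$ has finite state set $Q$, transitions $\delta\subseteq Q\times(A\cup\{\varepsilon\})^k\times Q$, initial states $I$; an infinite run is accepting if it starts in $I$ and all components of its label (componentwise concatenation of transition labels) are infinite. It is $\ell$-deterministic if $I$ is a singleton and, for two transitions from the same state with labels $(\alpha_i),(\alpha'_i)$, $\alpha_j=\varepsilon$ for some $j\le\ell$ implies $\alpha'_j=\varepsilon$, and $\alpha_i=\alpha'_i$ for all $i\le\ell$ implies equality of the remaining components and target states; it realizes the partial function mapping the first $\ell$ tapes to the remaining ones. A compressor is a $2$-deterministic $3$-automaton $\mathcal C$ (first input tape: the word $z$ to compress; second input tape: oracle $y$; third: output) such that for each fixed $y$ the map $z\mapsto\mathcal C(z,y)$ is injective. For the accepting run $q_0\xrightarrow{\alpha_1,\beta_1|w_1}q_1\xrightarrow{\alpha_2,\beta_2|w_2}\cdots$ with $z=\alpha_1\alpha_2\cdots$, $y=\beta_1\beta_2\cdots$, $\rho_{\mathcal C}(z/y)=\liminf_n|w_1\cdots w_n|/|\alpha_1\cdots\alpha_n|$, and $\rho(z/y)$ is the infimum of $\rho_{\mathcal C}(z/y)$ over all compressors. *)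

(* Defs.v *)
From HB Require Import structures.
From mathcomp Require Import all_boot all_order all_algebra.
From mathcomp Require Import all_classical all_reals.
From mathcomp Require Import ereal topology sequences.
Set Implicit Arguments. Unset Strict Implicit. Unset Printing Implicit Defensive.
Import Order.TTheory GRing.Theory Num.Theory.

Definition word (A : finType) := nat -> A.

(* A k-automaton <Q, A, delta, I>: labels are k-tuples over A ∪ {eps},
   encoded as finite functions 'I_k -> option A (None = eps). *)
Record automaton (A : finType) (k : nat) := Automaton {
  state : finType;
  trans : state -> {ffun 'I_k -> option A} -> state -> bool;
  init  : pred state }.
Arguments state {A k} a.
Arguments trans {A k} a _ _ _.
Arguments init {A k} a _.

Definition is_run (A : finType) (k : nat) (T : automaton A k)
    (st : nat -> state T) (lab : nat -> {ffun 'I_k -> option A}) : Prop :=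
  init T (st 0) /\ forall n, trans T (st n) (lab n) (st n.+1).

Definition comp_pre (A : finType) (k : nat)
    (lab : nat -> {ffun 'I_k -> option A}) (i : 'I_k) (n : nat) : seq A :=
  pmap id [seq lab m i | m <- iota 0 n].

Definition comp_is (A : finType) (k : nat)
    (lab : nat -> {ffun 'I_k -> option A}) (i : 'I_k) (x : word A) : Prop :=
  (forall N, exists n, (N <= size (comp_pre lab i n))%N) /\
  (forall n, comp_pre lab i n = mkseq x (size (comp_pre lab i n))).

Definition accepting_run (A : finType) (k : nat) (T : automaton A k)
    (st : nat -> state T) (lab : nat -> {ffun 'I_k -> option A})
    (xs : 'I_k -> word A) : Prop :=
  is_run st lab /\ forall i, comp_is lab i (xs i).

Arguments accepting_run {A k} T st lab xs.

Definition accepts (A : finType) (k : nat) (T : automaton A k)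
    (xs : 'I_k -> word A) : Prop :=
  exists st lab, accepting_run T st lab xs.

Definition deterministic (A : finType) (k : nat) (l : nat)
    (T : automaton A k) : Prop :=
  (exists q0 : state T, forall q, init T q = (q == q0)) /\
  forall p a q a' q', trans T p a q -> trans T p a' q' ->
    (forall j : 'I_k, (j < l)%N -> a j = None -> a' j = None) /\
    ((forall j : 'I_k, (j < l)%N -> a j = a' j) ->
       (forall j : 'I_k, (l <= j)%N -> a j = a' j) /\ q = q').

Definition words2 (A : finType) (x y : word A) (i : 'I_2) : word A :=
  if val i == 0%N then x else y.
Definition words3 (A : finType) (z y w : word A) (i : 'I_3) : word A :=
  match val i with 0 => z | 1 => y | _ => w end.

Definition realizes (A : finType) (T : automaton A 2)
    (dom : word A -> Prop) (f : word A -> word A) : Prop :=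
  forall x y, accepts T (words2 x y) <-> (dom x /\ f x = y).

Definition compressor (A : finType) (C : automaton A 3) : Prop :=
  deterministic 2 C /\
  forall y z z' w, accepts C (words3 z y w) -> accepts C (words3 z' y w) ->
    z = z'.

Definition tape0 : 'I_3 := @Ordinal 3 0 isT.
Definition tape2 : 'I_3 := @Ordinal 3 2 isT.

Local Open Scope ring_scope.
Local Open Scope ereal_scope.

Definition comp_ratio (R : realType) (A : finType)
    (lab : nat -> {ffun 'I_3 -> option A}) (n : nat) : \bar R :=
  (((size (comp_pre lab tape2 n))%:R / (size (comp_pre lab tape0 n))%:R)
     : R)%:E.

Definition rhoC (R : realType) (A : finType) (C : automaton A 3)
    (z y : word A) : set (\bar R) :=
  [set r | exists st lab w, accepting_run C st lab (words3 z y w) /\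
            r = limn_einf (comp_ratio R lab)].

Definition rho (R : realType) (A : finType) (z y : word A) : \bar R :=
  ereal_inf [set r | exists C : automaton A 3, compressor C /\ @rhoC R A C z y r].

(* Main.v *)
Require Import Defs.
From mathcomp Require Import all_boot all_order all_algebra.
From mathcomp Require Import all_classical all_reals.
From mathcomp Require Import ereal topology sequences normedtype.
From mathcomp Require Import zify.
Set Implicit Arguments. Unset Strict Implicit. Unset Printing Implicit Defensive.
Import Order.TTheory GRing.Theory Num.Theory.

Lemma comp_preS (A : finType) (k : nat) (lab : nat -> {ffun 'I_k -> option A}) i n :
  comp_pre lab i n.+1 = comp_pre lab i n ++ (if lab n i is Some a then [:: a] else [::]).
Proof.
rewrite /comp_pre -addn1 iotaD map_cat pmap_cat /=.
by case: (lab n i).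
Qed.

Lemma comp_pre_ext (A : finType) (k k' : nat) (lab : nat -> {ffun 'I_k -> option A})
  (lab' : nat -> {ffun 'I_k' -> option A}) i i' n :
  (forall m, (m < n)%N -> lab m i = lab' m i') -> comp_pre lab i n = comp_pre lab' i' n.
Proof.
move=> H; rewrite /comp_pre; congr pmap; apply/eq_in_map => m.
by rewrite mem_iota add0n => /H.
Qed.

Lemma last_of (A : Type) (s : seq A) t (y : nat -> A) :
  s ++ [:: t] = mkseq y (size (s ++ [:: t])) -> t = y (size s).
Proof.
move=> H; have := congr1 (fun l => nth t l (size s)) H.
by rewrite nth_cat ltnn subnn /= nth_mkseq // size_cat /= addn1 ltnSn.
Qed.

Lemma mkseq_const (A : Type) (a : A) m : mkseq (fun _ => a) m = nseq m a.
Proof.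
apply: (@eq_from_nth _ a); first by rewrite size_mkseq size_nseq.
by move=> i; rewrite size_mkseq => hi; rewrite nth_mkseq // nth_nseq hi.
Qed.

Definition tape1 : 'I_3 := @Ordinal 3 1 isT.
Definition o20 : 'I_2 := @Ordinal 2 0 isT.
Definition o21 : 'I_2 := @Ordinal 2 1 isT.

Lemma ord3 (j : 'I_3) : j = tape0 \/ j = tape1 \/ j = tape2.
Proof.
case: j => [[|[|[|m]]] Hm].
- by left; apply/val_inj.
- by right; left; apply/val_inj.
- by right; right; apply/val_inj.
- by [].
Qed.

Lemma ord2 (j : 'I_2) : j = o20 \/ j = o21.
Proof.
case: j => [[|[|m]] Hm].
- by left; apply/val_inj.
- by right; apply/val_inj.
- by [].
Qed.

Section Constr.
Variables (A : finType) (T : automaton A 2) (q0 : state T) (a0 : A) (k : nat).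

Definition Ctrans (s : (state T * option A * 'I_k.+1)%type) (L : {ffun 'I_3 -> option A})
   (s' : (state T * option A * 'I_k.+1)%type) : bool :=
  let: (p, buf, c) := s in let: (q, buf', c') := s' in
  [&& trans T p [ffun i : 'I_2 => if val i == 0%N then L tape1 else buf'] q,
      L tape0 == buf,
      c' == (if buf is Some _ then inZp c.+1 else c) &
      L tape2 == (if buf is Some _ then (if val c == k then Some a0 else None) else None)].

Definition Caut : automaton A 3 :=
  @Automaton A 3 (state T * option A * 'I_k.+1)%type Ctrans
    (fun s => s == (q0, None, ord0)).

Lemma Caut_det : deterministic 1 T -> deterministic 2 Caut.
Proof.
move=> [_ dT]; split; first by exists (q0, None, ord0).
move=> [[p buf] c] L [[q b] c'] L' [[q' b'] c''] /and4P[hT h0 hc h2] /and4P[hT' h0' hc' h2'].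
have [d1 d2] := dT _ _ _ _ _ hT hT'.
split.
- move=> j; case: (ord3 j) => [->|[->|->]] // _.
  + by rewrite (eqP h0) (eqP h0').
  + move=> e; have := d1 o20 isT; rewrite !ffunE /=; by apply.
- move=> heq; have e1 : L tape1 = L' tape1 by apply: heq.
  have [e2 eq] : (forall j : 'I_2, (1 <= j)%N ->
       [ffun i : 'I_2 => if val i == 0%N then L tape1 else b] j =
       [ffun i : 'I_2 => if val i == 0%N then L' tape1 else b'] j) /\ q = q'.
    apply: d2 => j; case: (ord2 j) => -> // _; by rewrite !ffunE /= e1.
  have eb : b = b' by have := e2 o21 isT; rewrite !ffunE.
  subst; split.
  + move=> j; case: (ord3 j) => [->|[->|->]] // _.
    by rewrite (eqP h2) (eqP h2').
  + by rewrite (eqP hc) (eqP hc').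
Qed.


Lemma Caut_tape0 s L s' : trans Caut s L s' -> L tape0 = s.1.2.
Proof. by case: s s' => [[p buf] c] [[q b] c'] /and4P[_ /eqP -> _ _]. Qed.

Lemma Caut_inj : deterministic 1 T -> forall y z z' w,
  accepts Caut (words3 z y w) -> accepts Caut (words3 z' y w) -> z = z'.
Proof.
move=> dT y z z' w [st [lab [[i0 tr] comp]]] [st' [lab' [[i0' tr'] comp']]].
have [_ dC] := Caut_det dT.
have claim : forall n, st n = st' n /\ forall m, (m < n)%N -> lab m = lab' m.
  elim=> [|n [es el]].
    by split=> //; rewrite (eqP i0) (eqP i0').
  have t1 := tr n; have t2 := tr' n; rewrite -es in t2.
  have [d1 d2] := dC _ _ _ _ _ t1 t2.
  have [d1' _] := dC _ _ _ _ _ t2 t1.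
  have e01 : forall j : 'I_3, (j < 2)%N -> lab n j = lab' n j.
    move=> j; case: (ord3 j) => [->|[->|->]] // _.
      by rewrite (Caut_tape0 t1) (Caut_tape0 t2).
    have ep : comp_pre lab tape1 n = comp_pre lab' tape1 n.
      by apply: comp_pre_ext => m /el ->.
    case E: (lab n tape1) => [t|]; case E': (lab' n tape1) => [t'|].
    - have P := (comp tape1).2 n.+1; rewrite comp_preS E in P.
      have P' := (comp' tape1).2 n.+1; rewrite comp_preS E' in P'.
      by rewrite (last_of P) (last_of P') ep.
    - by have := d1' tape1 isT E'; rewrite E.
    - by have := d1 tape1 isT E; rewrite E'.
    - by [].
  have [e2 est] := d2 e01.
  have eL : lab n = lab' n.
    apply/ffunP => j; case: (leqP 2 j) => hj; first exact: e2.
    exact: e01.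
  split; first exact: est.
  move=> m; rewrite ltnS leq_eqVlt => /orP[/eqP ->|/el] //.
apply: functional_extensionality_dep => i.
have [n hn] := (comp tape0).1 i.+1.
have P := (comp tape0).2 n; have P' := (comp' tape0).2 n.
have ep : comp_pre lab tape0 n = comp_pre lab' tape0 n.
  by apply: comp_pre_ext => m /((claim n).2) ->.
rewrite -ep in P'; rewrite P' in P.
have := congr1 (fun l => nth (z i) l i) P.
by rewrite !nth_mkseq //= size_mkseq.
Qed.

Section Run.
Variables (st : nat -> state T) (lab : nat -> {ffun 'I_2 -> option A}).

Definition bufn n := if n is m.+1 then lab m o21 else None.
Definition Zs n := size (comp_pre lab o21 n.-1).
Definition cntn n : 'I_k.+1 := inZp (Zs n).
Definition stC n : state Caut := (st n, bufn n, cntn n).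
Definition outn n := if bufn n is Some _ then (if val (cntn n) == k then Some a0 else None) else None.
Definition labC n : {ffun 'I_3 -> option A} :=
  [ffun j : 'I_3 => match val j with 0 => bufn n | 1 => lab n o20 | _ => outn n end].

Lemma F1 n : comp_pre lab o21 n = comp_pre lab o21 n.-1 ++ (if bufn n is Some a then [:: a] else [::]).
Proof. by case: n => [|n] //=; rewrite comp_preS. Qed.

Lemma ZsS n : Zs n.+1 = Zs n + (if bufn n is Some _ then 1 else 0)%N.
Proof. by rewrite /Zs /= F1 size_cat; case: (bufn n). Qed.

Lemma F2 n : comp_pre labC tape0 n = comp_pre lab o21 n.-1.
Proof.
elim: n => [|n IH] //; rewrite comp_preS IH ffunE /= [in RHS]F1.
by case: (bufn n).
Qed.

Lemma F3 n : comp_pre labC tape1 n = comp_pre lab o20 n.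
Proof. by apply: comp_pre_ext => m _; rewrite ffunE. Qed.

Lemma divS z : (z.+1 %/ k.+1 = z %/ k.+1 + (z %% k.+1 == k))%N.
Proof.
rewrite {1}(divn_eq z k.+1) -addnS divnMDl //.
have := ltn_pmod z (ltn0Sn k).
case: eqP => [->|ne] lt; first by rewrite divnn.
rewrite (@divn_small (z %% k.+1).+1) ?addn0 //; move: ne lt; set r := z %% k.+1; lia.
Qed.

Lemma F4 n : comp_pre labC tape2 n = nseq (Zs n %/ k.+1) a0.
Proof.
elim: n => [|n IH] //; rewrite comp_preS IH ffunE /= ZsS /outn /cntn.
case: (bufn n) => [b|]; last by rewrite addn0 cats0.
rewrite addn1 divS /=; case: eqP => _; last by rewrite addn0 cats0.
by rewrite nseqD.
Qed.

Lemma stC_run : (forall q, init T q = (q == q0)) -> is_run st lab -> is_run stC labC.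
Proof.
move=> hq [i0 tr]; split.
  rewrite /= /stC /=; apply/eqP; congr (_, _, _).
  - by move: i0; rewrite hq => /eqP.
  - by apply/val_inj.
move=> n; rewrite /= /stC /=; apply/and4P; split.
- suff -> : [ffun i : 'I_2 => if val i == 0%N then labC n tape1 else bufn n.+1] = lab n by [].
  apply/ffunP => i; case: (ord2 i) => ->; by rewrite !ffunE.
- by rewrite ffunE.
- rewrite /cntn ZsS; case: (bufn n) => [b|]; apply/eqP/val_inj => /=; last by rewrite addn0.
  by rewrite -[(Zs n %% k.+1).+1]addn1 modnDml.
- by rewrite ffunE.
Qed.

Lemma stC_acc (x fx : word A) : (forall q, init T q = (q == q0)) ->
  accepting_run T st lab (words2 x fx) ->
  accepting_run Caut stC labC (words3 fx x (fun _ => a0)).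
Proof.
move=> hq [run comp]; split; first exact: stC_run.
have c0 : comp_is lab o20 x := comp o20.
have c1 : comp_is lab o21 fx := comp o21.
move=> j; case: (ord3 j) => [->|[->|->]] /=.
- split.
  + by move=> N; have [n hn] := c1.1 N; exists n.+1; rewrite F2.
  + by move=> n; rewrite F2; exact: c1.2.
- split.
  + by move=> N; have [n hn] := c0.1 N; exists n; rewrite F3.
  + by move=> n; rewrite F3; exact: c0.2.
- split.
  + move=> N; have [n hn] := c1.1 (N * k.+1)%N; exists n.+1.
    by rewrite F4 size_nseq leq_divRL.
  + by move=> n; rewrite F4 size_nseq mkseq_const.
Qed.

Lemma ratio_le (R : realType) (m : nat) : (((m %/ k.+1)%:R / m%:R : R) <= (k.+1)%:R^-1)%R.
Proof.
case: m => [|m]; first by rewrite div0n mul0r invr_ge0 ler0n.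
rewrite ler_pdivrMr ?ltr0Sn // mulrC ler_pdivlMr ?ltr0Sn // -natrM ler_nat.
exact: leq_divM.
Qed.

Lemma stC_ratio (R : realType) n : (comp_ratio R labC n <= ((k.+1)%:R^-1)%:E)%E.
Proof. by rewrite /comp_ratio F4 F2 size_nseq lee_fin; exact: ratio_le. Qed.

End Run.

End Constr.
Section E.
Local Open Scope ereal_scope.
Lemma einf_ge (R : realType) (u : (\bar R)^nat) c : (forall n, c <= u n) -> c <= limn_einf u.
Proof.
move=> H; rewrite limn_einf_lim; apply: lime_ge; first exact: is_cvg_einfs.
apply: nearW => n; apply: le_ereal_inf_tmp => _ [m _ <-]; exact: H.
Qed.

Lemma einf_le (R : realType) (u : (\bar R)^nat) c : (forall n, u n <= c) -> limn_einf u <= c.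
Proof.
move=> H; rewrite limn_einf_lim; apply: lime_le; first exact: is_cvg_einfs.
apply: nearW => n; apply: (le_trans _ (H n)); apply: ereal_inf_lbound; by exists n => /=.
Qed.
End E.

Theorem proposition3 (R : realType) (A : finType) (T : automaton A 2)
    (dom : word A -> Prop) (f : word A -> word A) :
  deterministic 1 T -> realizes T dom f ->
  forall x : word A, dom x -> rho R (f x) x = 0%E.
Proof.
move=> dT real x domx.
have [st [lab acc]] : accepts T (words2 x (f x)) by apply/real.
have [[q1 hq1] _] := dT.
pose a0 := x 0%N.
have hk : forall k, (rho R (f x) x <= ((k.+1)%:R^-1)%:E)%E.
  move=> k; apply: le_trans; last exact: (einf_le (stC_ratio a0 k lab R)).
  apply: ereal_inf_lbound; exists (Caut q1 a0 k); split.
    by split; [exact: Caut_det | exact: Caut_inj].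
  exists (stC q1 a0 k st lab), (labC a0 k lab), (fun _ => a0); split => //.
  exact: (stC_acc a0 k hq1 acc).
have h0 : (0 <= rho R (f x) x)%E.
  apply: le_ereal_inf_tmp => _ [C [_ [st' [lab' [w [_ ->]]]]]]; apply: einf_ge => n.
  by rewrite /comp_ratio lee_fin divr_ge0.
move: hk h0 (hk 0%N); case: (rho R (f x) x) => [r| |] //= hk h0 _.
rewrite lee_fin in h0; congr EFin; apply/eqP; rewrite eq_le h0 andbT.
rewrite leNgt; apply/negP => rpos.
move: (truncnS_gt r^-1) (hk (Num.Def.trunc r^-1)).
set K := ((_.+1)%:R)%R; rewrite lee_fin => h1 h2.
have Kpos : (0 < K)%R by rewrite ltr0Sn.
move: h2; rewrite -div1r ler_pdivlMr // => h2.
move: h1; rewrite -[(r^-1)%R]mulr1 ltr_pdivrMl // => h1.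
by have := lt_le_trans h1 h2; rewrite ltxx.
Qed.
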